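(* Let $p_1\ne p_2$ be primes and $a,b>0$ integers, and let $n=p_1^a p_2^b$. Then for every integer $k$ with $1\le k\le n-1$, $\binom{n}{k}$ is divisible by $p_1$ or by $p_2$ (i.e., $n$ satisfies Condition 1 with $p_1$ and $p_2$).
   Context: A positive integer $n$ satisfies Condition 1 with primes $p$ and $q$ if for all integers $k$ with $1\le k\le n-1$ the binomial coefficient $\binom{n}{k}$ is divisible by at least one of $p$ or $q$. *)

(* Defs.v *)
From mathcomp Require Import all_boot.
Set Implicit Arguments. Unset Strict Implicit. Unset Printing Implicit Defensive.

Definition condition1 (n p q : nat) : Prop :=
  forall k : nat, 1 <= k -> k <= n - 1 -> (p %| 'C(n, k)) || (q %| 'C(n, k)).

(* Main.v *)
Require Import Defs.
From mathcomp Require Import all_boot.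

Lemma key (p e n k : nat) : prime p -> p ^ e %| n -> 0 < k ->
  ~~ (p %| 'C(n, k)) -> p ^ e %| k.
Proof.
move=> pp hd; case: k => [|k] // _ hn.
have co : coprime (p ^ e) 'C(n, k.+1) by apply: coprimeXl; rewrite prime_coprime.
rewrite -(Gauss_dvdl _ co) -mul_bin_diag.
exact: dvdn_mulr.
Qed.

Theorem mainTheorem4 (p1 p2 a b : nat) :
  prime p1 -> prime p2 -> p1 != p2 -> 0 < a -> 0 < b ->
  condition1 (p1 ^ a * p2 ^ b) p1 p2.
Proof.
move=> pp1 pp2 ne _ _ k k1 kn.
apply/negPn/negP; rewrite negb_or => /andP[h1 h2].
have d1 := @key p1 a _ k pp1 (dvdn_mulr _ (dvdnn _)) k1 h1.
have d2 := @key p2 b _ k pp2 (dvdn_mull _ (dvdnn _)) k1 h2.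
have co : coprime (p1 ^ a) (p2 ^ b).
  by apply: coprimeXl; apply: coprimeXr; rewrite prime_coprime // dvdn_prime2.
have : p1 ^ a * p2 ^ b %| k by rewrite Gauss_dvd // d1 d2.
move/(dvdn_leq k1).
have : 0 < p1 ^ a * p2 ^ b by rewrite muln_gt0 !expn_gt0 !prime_gt0.
move: kn; set N := _ * _; move=> kn Np hle.
have : k < N by apply: (leq_ltn_trans kn); rewrite subn1 prednK.
by rewrite ltnNge hle.
Qed.
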